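(* Let $D\subset\mathbb{C}$ be an open disk centered at $0$, $f_1,\dots,f_p:D\to\mathbb{C}$ analytic, $A_1,\dots,A_p\in\mathbb{C}^{n\times n}$ with $M(\lambda)=\sum_{m=1}^p f_m(\lambda)A_m$ satisfying $M(\lambda)^T=M(\lambda)$ on $D$, and $M_j:=M^{(j)}(0)=\sum_{m=1}^pf_m^{(j)}(0)A_m$. Let $\mathbf{C}=[c_{i,j}]$ be the infinite matrix determined by $c_{i,1}=1/(i+1)$ ($i\ge1$) and $c_{i-1,j}=\frac{j}{i}c_{i,j-1}$ ($i,j>1$); let $\mathbf{S}$ be the infinite block matrix with $S_{1,1}=I$, $S_{1,j}=S_{j,1}=0$ ($j\ge2$), $S_{i,j}=c_{i-1,j-1}M_{i+j-2}$ ($i,j\ge2$); let $\mathbf{A}=\operatorname{diag}(-M_0,I,I,\dots)$; and let $\mathbf{B}$ have first block row $(M_1,\frac12M_2,\frac13M_3,\dots)$, blocks $\frac1jI$ in positions $(j+1,j)$, zeros elsewhere. $[\mathbf{X}]_N$ denotes the leading $N\times N$ block submatrix. Let $k+1\le N$, assume $[\mathbf{S}]_{2N}$ and $[\mathbf{S}\mathbf{A}]_N$ are invertible, let $q_k\in\mathbb{C}^{Nn}$ have only its first $k$ blocks (in $\mathbb{C}^n$) nonzero, and let $w=[\mathbf{S}\mathbf{A}]_N^{-1}[\mathbf{S}\mathbf{B}]_Nq_k$; only the first $k+1$ blocks of $w$ are nonzero, and let $W\in\mathbb{C}^{n\times(k+1)}$ have these blocks as columns. Let $z=[\mathbf{S}\mathbf{B}]_Nw$.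 Then the first $k+1$ blocks of $z$, forming the columns of $Z=[z_1,\dots,z_{k+1}]$, satisfy $$Z=\sum_{m=1}^pA_mW\,(G_{k+1}\circ F_m),$$ where $G_{k+1}\in\mathbb{R}^{(k+1)\times(k+1)}$ has entries $g_{j,1}=g_{1,j}=1/j$ for $j=1,\dots,k+1$ and $g_{i,j}=c_{i-1,j}/j$ for $i,j\ge2$, and $F_m\in\mathbb{C}^{(k+1)\times(k+1)}$ is the Hankel matrix with $(i,j)$ entry $f_m^{(i+j-1)}(0)$.
   Context: $\circ$ denotes the Hadamard (entrywise) product. Transpose is non-conjugate. *)

(* Defs.v *)
From HB Require Import structures.
From mathcomp Require Import all_boot all_order all_algebra.
From mathcomp Require Import all_classical all_reals all_analysis.
From mathcomp Require Import complex.
Set Implicit Arguments. Unset Strict Implicit. Unset Printing Implicit Defensive.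
Import Order.TTheory GRing.Theory Num.Theory.
Import numFieldNormedType.Exports.
Local Open Scope classical_set_scope.
Local Open Scope ring_scope.
Local Open Scope complex_scope.

(* The complex numbers C = R[i] over an arbitrary real field R : realType,
   seen as a numFieldType (so that it is a normed module over itself and
   derive1 is the complex derivative). *)
Definition Cx (R : realType) : numFieldType := R[i].

Definition disk (R : realType) (r : R) : set (Cx R) :=
  [set z : Cx R | `|z| < (r%:C : Cx R)].

Definition analytic_on (R : realType) (D : set (Cx R)) (f : Cx R -> Cx R) :=
  forall z0, D z0 -> exists (a : nat -> Cx R) (rho : R), 0 < rho /\
    forall z : Cx R, `|z - z0| < (rho%:C : Cx R) ->
      (fun K => \sum_(k < K) a k * (z - z0) ^+ k) @ \oo --> f z.

Definition Mfun (R : realType) (p n : nat) (f : 'I_p -> Cx R -> Cx R)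
  (A : 'I_p -> 'M[Cx R]_n) (lam : Cx R) : 'M[Cx R]_n :=
  \sum_(m < p) f m lam *: A m.

Definition Mder (R : realType) (p n : nat) (f : 'I_p -> Cx R -> Cx R)
  (A : 'I_p -> 'M[Cx R]_n) (j : nat) : 'M[Cx R]_n :=
  \sum_(m < p) (derive1n j (f m) 0) *: A m.

(* cf i j' = c_{i, j'+1} : c_{i,1} = 1/(i+1), c_{i,j} = j/(i+1) c_{i+1,j-1}
   (the recurrence c_{i-1,j} = (j/i) c_{i,j-1}). *)
Fixpoint cf (R : realType) (i j : nat) {struct j} : Cx R :=
  match j with
  | 0 => (i.+1)%:R^-1
  | j'.+1 => (j'.+2)%:R / (i.+1)%:R * cf R i.+1 j'
  end.
(* c i j = c_{i,j} for i, j >= 1 (1-based as in the paper) *)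
Definition cc (R : realType) (i j : nat) : Cx R := cf R i j.-1.

(* Infinite block matrices, 1-based block indices; index 0 is unused (= 0). *)
Definition bmat (R : realType) (n : nat) := nat -> nat -> 'M[Cx R]_n.

Definition Smat (R : realType) (n : nat) (M : nat -> 'M[Cx R]_n) : bmat R n :=
  fun i j =>
    if (i == 0%N) || (j == 0%N) then 0
    else if (i == 1%N) && (j == 1%N) then 1%:M
    else if (i == 1%N) || (j == 1%N) then 0
    else cc R i.-1 j.-1 *: M (i + j - 2)%N.

Definition Amat (R : realType) (n : nat) (M : nat -> 'M[Cx R]_n) : bmat R n :=
  fun i j =>
    if (i == 0%N) || (i != j) then 0
    else if i == 1%N then - M 0%N else 1%:M.

Definition Bmat (R : realType) (n : nat) (M : nat -> 'M[Cx R]_n) : bmat R n :=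
  fun i j =>
    if j == 0%N then 0
    else if i == 1%N then (j%:R)^-1 *: M j
    else if i == j.+1 then ((j%:R)^-1)%:M
    else 0.

(* Product of infinite block matrices X * Y, for Y whose column j is
   supported in block rows 1..j+1 (true for A and B, see the lemmas below);
   for such Y this finite sum is exactly the infinite product. *)
Definition imul (R : realType) (n : nat) (X Y : bmat R n) : bmat R n :=
  fun i j => \sum_(l < j.+2) X i l *m Y l j.

Lemma Amat_supp (R : realType) n M l j : (l == 0%N) || (j.+1 < l)%N ->
  @Amat R n M l j = 0.
Proof.
rewrite /Amat; case/orP => [/eqP -> //|Hl].
have -> : (l != j) by rewrite neq_ltn (ltn_trans (ltnSn j) Hl) orbT.
by rewrite orbT.
Qed.

Lemma Bmat_supp (R : realType) n M l j : (l == 0%N) || (j.+1 < l)%N ->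
  @Bmat R n M l j = 0.
Proof.
rewrite /Bmat; case: (j =P 0%N) => [//|_].
case/orP => [/eqP ->|Hl] //.
have -> : (l == 1%N) = false by apply/negbTE; case: l Hl => // -[].
have -> : (l == j.+1) = false by apply/negbTE; rewrite neq_ltn Hl orbT.
by [].
Qed.

Definition trunc (R : realType) (n N : nat) (X : bmat R n)
  : 'M[Cx R]_(\sum_(i < N) n) :=
  @mxblock _ N N (fun _ => n) (fun _ => n) (fun i j => X i.+1 j.+1).

(* l-th block (1-based) of a block vector in C^{Nn}; 0 if out of range *)
Definition blk (R : realType) (n N : nat) (v : 'cV[Cx R]_(\sum_(i < N) n))
  (l : nat) : 'cV[Cx R]_n :=
  if l is l'.+1 then
    match (insub l' : option 'I_N) with
    | Some i => @submxcol _ N (fun _ => n) 1 v i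
    | None => 0
    end
  else 0.

Definition hadamard (T : ringType) (m n : nat) (X Y : 'M[T]_(m, n)) :=
  \matrix_(i, j) (X i j * Y i j).

(* G_K : g_{j,1} = g_{1,j} = 1/j, g_{i,j} = c_{i-1,j}/j (i,j >= 2);
   0-based indices a = i-1, b = j-1. *)
Definition Gmat (R : realType) (K : nat) : 'M[Cx R]_K :=
  \matrix_(a < K, b < K)
    if (a : nat) == 0%N then (b.+1%:R)^-1
    else if (b : nat) == 0%N then (a.+1%:R)^-1
    else cc R a b.+1 / (b.+1)%:R.

Definition Fmat (R : realType) (g : Cx R -> Cx R) (K : nat) : 'M[Cx R]_K :=
  \matrix_(a < K, b < K) derive1n (a + b + 1)%N g 0.

(* Main.v *)
Require Import Defs.
From HB Require Import structures.
From mathcomp Require Import all_boot all_order all_algebra.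
From mathcomp Require Import all_classical all_reals all_analysis.
From mathcomp Require Import complex.
From mathcomp Require Import ring zify.
Import Order.TTheory GRing.Theory Num.Theory.
Import numFieldNormedType.Exports.
Local Open Scope classical_set_scope.
Local Open Scope ring_scope.

Section H.
Variables (R : realType) (n : nat).

Lemma blkS N (v : 'cV[Cx R]_(\sum_(i < N) n)) (i : 'I_N) : blk v i.+1 = submxcol v i.
Proof. by rewrite /blk valK. Qed.

Lemma blk_out N (v : 'cV[Cx R]_(\sum_(i < N) n)) l : (N <= l)%N -> blk v l.+1 = 0.
Proof. by move=> H; rewrite /blk insubF // ltnNge H. Qed.

Lemma blk_trunc_mul N (X : bmat R n) (v : 'cV[Cx R]_(\sum_(i < N) n)) (i : 'I_N) :
  blk (trunc N X *m v) i.+1 = \sum_(j < N) X i.+1 j.+1 *m blk v j.+1.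
Proof.
rewrite blkS -{1}[v]submxcolK /trunc mul_mxblock_mxrow mxcolK.
by apply: eq_bigr => j _; rewrite blkS.
Qed.

Lemma cf_closed i j : cf R i j = (i`! * j.+1`!)%:R / ((i + j).+1)`!%:R.
Proof.
have nz m : (m`!)%:R != 0 :> Cx R by rewrite pnatr_eq0 -lt0n fact_gt0.
have nzS m : 1 + m%:R != 0 :> Cx R by rewrite addrC natr1 pnatr_eq0.
elim: j i => [|j IH] i /=.
  rewrite addn0 (factS i) !natrM.
  by field; rewrite ?nz ?nzS.
rewrite IH.
have -> : ((i.+1 + j).+1) = (i + j.+1).+1 by rewrite addSnnS.
rewrite (factS j.+1) (factS i) !natrM.
field; rewrite nzS andbT; apply/andP; split; first exact: nz.
have -> : 1 + (i%:R + (1 + j%:R)) = (i + j.+1).+1%:R :> Cx R by ring.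
by rewrite pnatr_eq0.
Qed.

Lemma cc_sym b j : cc R b j.+1 / (j.+1)%:R = cc R j b.+1 / (b.+1)%:R.
Proof.
have nz m : (m`!)%:R != 0 :> Cx R by rewrite pnatr_eq0 -lt0n fact_gt0.
have nzS m : 1 + m%:R != 0 :> Cx R by rewrite addrC natr1 pnatr_eq0.
rewrite /cc /= !cf_closed addnC (factS j) (factS b) !natrM.
field; rewrite !nzS /=; apply/andP; split; first exact: nz.
by rewrite -natrD nzS.
Qed.

Variable M : nat -> 'M[Cx R]_n.

Lemma SA_E i j : (0 < i)%N -> (0 < j)%N ->
  imul (Smat M) (Amat M) i j =
  if j == 1%N then (if i == 1%N then - M 0%N else 0) else Smat M i j.
Proof.
move=> i0 j0.
rewrite /imul (bigD1 (Ordinal (ltn_trans (ltnSn j) (ltnSn j.+1)))) //= big1 ?addr0.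
  rewrite /Amat eqxx orbF (negbTE (lt0n_neq0 j0)).
  case: eqP => [->|_]; last by rewrite mulmx1.
  rewrite /Smat (negbTE (lt0n_neq0 i0)) /= andbT.
  by case: eqP => _; rewrite ?mul1mx ?mul0mx.
move=> l /eqP Hl; rewrite /Amat.
have -> : (l : nat) != j by apply/eqP => E; apply: Hl; exact: val_inj.
by rewrite orbT mulmx0.
Qed.

Lemma SB_E i j : (0 < i)%N -> (0 < j)%N ->
  imul (Smat M) (Bmat M) i j =
  if i == 1%N then (j%:R)^-1 *: M j else (cc R i.-1 j / j%:R) *: M (i + j - 1)%N.
Proof.
move=> i0; case: j => // j _.
rewrite /imul big_ord_recr /= big_ord_recl /= big_ord_recl /= big1; last first.
  move=> l _; rewrite /bump /= /Bmat /=.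
  have -> : (l.+2 == j.+2) = false by apply/negbTE; rewrite neq_ltn ltnS ltnS ltn_ord.
  by rewrite mulmx0.
have S0 : Smat M i 0 = 0 by rewrite /Smat orbT.
rewrite S0 mul0mx add0r addr0 /bump /= /Bmat /= eqxx.
case: (i =P 1%N) => [->|ne].
  by rewrite /Smat /= mul1mx mul0mx addr0.
rewrite /Smat (negbTE (lt0n_neq0 i0)) (introF eqP ne) /= mul0mx add0r.
rewrite mul_mx_scalar scalerA mulrC addnS subSS addnS.
by [].
Qed.

Lemma blk_col N (F : 'I_N -> 'cV[Cx R]_n) i (H : (i < N)%N) :
  blk (\mxcol_j F j) i.+1 = F (Ordinal H).
Proof. by have := @blkS N (\mxcol_j F j) (Ordinal H); rewrite /= mxcolK. Qed.

Lemma blk_trunc_mul' N (X : bmat R n) (v : 'cV[Cx R]_(\sum_(i < N) n)) i :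
  (i < N)%N -> blk (trunc N X *m v) i.+1 = \sum_(j < N) X i.+1 j.+1 *m blk v j.+1.
Proof. by move=> H; have := @blk_trunc_mul N X v (Ordinal H). Qed.

Lemma shift_sum N (L Rr : nat -> 'cV[Cx R]_n) : (0 < N)%N -> L 0%N = 0 ->
  (forall j, (j.+1 < N)%N -> L j.+1 = Rr j) -> Rr N.-1 = 0 ->
  \sum_(j < N) L j = \sum_(j < N) Rr j.
Proof.
case: N => // N _ L0 HL RN.
rewrite big_ord_recl big_ord_recr /= L0 RN add0r addr0.
by apply: eq_bigr => j _; rewrite /bump /= HL // ltnS ltn_ord.
Qed.

Lemma sum_narrow N K (F : nat -> 'cV[Cx R]_n) : (K <= N)%N ->
  (forall j, (K <= j)%N -> F j = 0) -> \sum_(j < N) F j = \sum_(j < K) F j.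
Proof.
move=> KN HF; rewrite -!(big_mkord xpredT) (big_cat_nat (leq0n K) KN) /=.
have -> : \sum_(K <= i < N) F i = 0.
  by rewrite big_nat_cond big1 // => i /andP[/andP[Hi _] _]; exact: HF.
by rewrite addr0.
Qed.

Definition gg (c b : nat) : Cx R :=
  if c == 0%N then (b.+1%:R)^-1
  else if b == 0%N then (c.+1%:R)^-1
  else cc R c b.+1 / (b.+1)%:R.

Lemma SB_G b c : imul (Smat M) (Bmat M) b.+1 c.+1 = gg c b *: M (c + b + 1)%N.
Proof.
rewrite SB_E // /gg.
case: b => [|b] /=.
  by rewrite addn0 addn1; case: c.
case: c => [|c] /=.
  by rewrite /cc /= divr1; congr (_ *: M _); lia.
rewrite -cc_sym; congr (_ *: M _); lia.
Qed.
End H.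
Theorem theorem4 (R : realType) (n p : nat) (r : R)
  (f : 'I_p -> Cx R -> Cx R) (A : 'I_p -> 'M[Cx R]_n)
  (N k : nat) (qb : 'I_N -> 'cV[Cx R]_n) :
  0 < r ->
  (forall m, analytic_on (disk r) (f m)) ->
  (forall lam, disk r lam -> (Mfun f A lam)^T = Mfun f A lam) ->
  (k.+1 <= N)%N ->
  let M := Mder f A in
  let S := Smat M in
  trunc (2 * N) S \in unitmx ->
  trunc N (imul S (Amat M)) \in unitmx ->
  (forall i : 'I_N, (k <= i)%N -> qb i = 0) ->
  let q := \mxcol_i qb i in
  let w := invmx (trunc N (imul S (Amat M))) *m (trunc N (imul S (Bmat M)) *m q) in
  let W := \matrix_(a < n, b < k.+1) blk w b.+1 a 0 in
  let z := trunc N (imul S (Bmat M)) *m w in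
  let Z := \matrix_(a < n, b < k.+1) blk z b.+1 a 0 in
  (forall l, (k.+1 < l)%N -> blk w l = 0) /\
  Z = \sum_(m < p) A m *m W *m hadamard (Gmat R k.+1) (Fmat (f m) k.+1).
Proof.
move=> r0 _ _ kN M S HS HT Hq q w W z Z.
have N0 : (0 < N)%N by exact: (leq_trans (ltn0Sn k) kN).
pose T := trunc N (imul S (Amat M)).
pose U := trunc N (imul S (Bmat M)).
have Tw : T *m w = U *m q by rewrite /w mulKVmx.
pose yf := fun l : nat => if l is l'.+1 then (l%:R)^-1 *: blk q l else blk w 1.
pose y := \mxcol_(i < N) yf i.
have blky j : (j < N)%N -> blk y j.+1 = yf j by move=> H; rewrite /y blk_col.
have blkq j : (k <= j)%N -> blk q j.+1 = 0.
  move=> kj; case: (ltnP j N) => H; last by rewrite blk_out.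
  by rewrite /q blk_col Hq.
have Ty : T *m y = T *m w.
  apply/mxcolP => i; rewrite -!blkS.
  case: i => [[|i'] Hi].
    rewrite /T !blk_trunc_mul; apply: eq_bigr => -[[|j] Hj] _; first by rewrite blky.
    rewrite SA_E //= /Smat /=.
    by rewrite !mul0mx.
  rewrite Tw /T /U !blk_trunc_mul /=.
  apply: (@shift_sum R n N (fun j => imul S (Amat M) i'.+2 j.+1 *m blk y j.+1)
     (fun j => imul S (Bmat M) i'.+2 j.+1 *m blk q j.+1)) => //.
  - by rewrite SA_E //= mul0mx.
  - move=> j Hj; cbv beta; rewrite blky // /yf; cbv beta iota.
    set v := blk q j.+1.
    rewrite /S SA_E // SB_E // /Smat /=.
    rewrite -scalemxAr -!scalemxAl scalerA mulrC.
    by congr (_ *: (M _ *m _)); lia.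
  - by rewrite blkq ?mulmx0 // -ltnS prednK.
have wy : w = y by rewrite -[w](mulKmx HT) -Ty mulKmx.
have wsupp l : (k.+1 < l)%N -> blk w l = 0.
  case: l => // j Hj; case: (ltnP j N) => H; last by rewrite blk_out.
  case: j Hj H => [|j] Hj H //.
  rewrite wy blky // /yf; cbv beta iota.
  by rewrite blkq ?scaler0 //; lia.
split => //.
apply/matrixP => a b.
have bN : (b < N)%N := leq_trans (ltn_ord b) kN.
rewrite summxE mxE /z (@blk_trunc_mul' _ _ _ _ _ _ bN).
rewrite (@sum_narrow _ _ N k.+1 (fun j => imul S (Bmat M) b.+1 j.+1 *m blk w j.+1)) //; last first.
  by move=> j Hj; rewrite wsupp ?mulmx0.
rewrite summxE.
under [RHS]eq_bigr => m _ do rewrite mxE.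
rewrite exchange_big /=; apply: eq_bigr => c _.
rewrite /S SB_G -scalemxAl mxE /M /Mder mulmx_suml summxE mulr_sumr.
apply: eq_bigr => m _.
have -> : (A m *m W) a c = (A m *m blk w c.+1) a 0.
  by rewrite !mxE; apply: eq_bigr => d _; rewrite !mxE.
rewrite -scalemxAl !mxE /gg.
ring.
Qed.
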